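(* Let $\rho>0$ and $n\ge1$ an integer. For the ancestral chain started at $(0,0,n)$ with $s(0)=0$, $\mathbb{P}_{0,0,n,0}[s(\tau)=0]=\frac{(n-1)!}{(\rho+1)_{n-1}}$, where $\tau=\inf\{s\ge0:(a(s),b(s),c(s))\in\{(0,0,1),(1,1,0)\}\}$ and $(x)_k=x(x+1)\cdots(x+k-1)$.
   Context: The ancestral chain $(a(t),b(t),c(t))$ with parameter $\rho$ is the continuous-time Markov chain on $\mathbb{Z}_+^3\setminus\{\mathbf 0\}$ which from $(a,b,c)$ jumps to $(a+1,b+1,c-1)$ at rate $c\rho/2$ (a recombination event), to $(a-1,b-1,c+1)$ at rate $ab$, to $(a-1,b,c)$ at rate $ac+a(a-1)/2$, to $(a,b-1,c)$ at rate $bc+b(b-1)/2$, and to $(a,b,c-1)$ at rate $c(c-1)/2$. $s(t)$ is the number of recombination jumps in $(0,t)$. *)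

(* Defs.v *)
From Stdlib Require Import Reals List Arith.
Import ListNotations.
Open Scope R_scope.

Definition state := (nat * nat * nat)%type.

Definition is_target (x : state) : bool :=
  let '(a, b, c) := x in
  ((Nat.eqb a 0 && Nat.eqb b 0 && Nat.eqb c 1)
   || (Nat.eqb a 1 && Nat.eqb b 1 && Nat.eqb c 0))%bool.

(** The possible jumps out of (a,b,c): (target, rate, is_recombination).
    Jumps that are impossible (e.g. a = 0 for a decrease of a) have rate 0,
    so the truncated nat subtraction in the target is irrelevant. *)
Definition jumps (rho : R) (x : state) : list (state * R * bool) :=
  let '(a, b, c) := x in
  [ ((a + 1, b + 1, c - 1)%nat, INR c * rho / 2, true);
    ((a - 1, b - 1, c + 1)%nat, INR a * INR b, false);
    ((a - 1, b, c)%nat, INR a * INR c + INR a * (INR a - 1) / 2, false);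
    ((a, b - 1, c)%nat, INR b * INR c + INR b * (INR b - 1) / 2, false);
    ((a, b, c - 1)%nat, INR c * (INR c - 1) / 2, false) ].

Definition qtot (rho : R) (x : state) : R :=
  fold_right (fun j acc => snd (fst j) + acc) 0 (jumps rho x).

(** [hit_norec rho k x] = probability, for the chain started at x with s = 0,
    that tau equals the k-th jump time and no recombination jump occurs in
    the open interval (0, tau), i.e. s(tau) = 0 with tau the k-th jump.
    Jump from x to y with rate r has (embedded jump chain) probability
    r / q(x).  The jump landing at time tau itself is not counted by s(tau)
    (s counts jumps in (0,t)). *)
Fixpoint hit_norec (rho : R) (k : nat) (x : state) : R :=
  if is_target x then (match k with O => 1 | S _ => 0 end)
  else match k with
       | O => 0
       | S k' =>
           fold_right
             (fun j acc =>
                let '(y, r, rec) := j in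
                acc + (if (negb rec || is_target y)%bool
                       then r / qtot rho x * hit_norec rho k' y else 0))
             0 (jumps rho x)
       end.

(** P_{x,0}[ s(tau) = 0 ] = sum over k of hit_norec rho k x
    (the events "tau is the k-th jump" are disjoint; on {tau = infinity}
    the event s(tau)=0 is not realized). *)
Definition prob_no_rec_before_tau (rho : R) (x : state) (p : R) : Prop :=
  infinite_sum (fun k => hit_norec rho k x) p.

Fixpoint poch (x : R) (k : nat) : R :=
  match k with
  | O => 1
  | S k' => poch x k' * (x + INR k')
  end.

(* Main.v *)
Require Import Defs.
From Stdlib Require Import Reals Arith Factorial.
From Stdlib Require Import Lra Lia.
Open Scope R_scope.

Lemma poch_pos (rho : R) (m : nat) : 0 < rho -> 0 < poch (rho + 1) m.
Proof.
  intros Hr; induction m as [|m IH]; simpl; [lra|].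
  apply Rmult_lt_0_compat; [exact IH|]. pose proof (pos_INR m); lra.
Qed.

Definition PP (rho : R) (m : nat) := INR (fact m) / poch (rho + 1) m.

Lemma hit_chain (rho : R) (m : nat) : 0 < rho -> forall k,
  hit_norec rho k (0%nat, 0%nat, S m) = if Nat.eqb k m then PP rho m else 0.
Proof.
  intros Hr. induction m as [|m IH]; intros k.
  - destruct k; simpl; unfold PP; simpl; try reflexivity. field.
  - destruct k as [|k].
    + reflexivity.
    + cbn -[INR qtot Rdiv].
      rewrite IH.
      cbn -[INR Rdiv].
      simpl (INR 0).
      pose proof (pos_INR m) as Hm.
      pose proof (poch_pos rho m Hr) as Hp.
      destruct (Nat.eqb k m) eqn:E.
      * unfold PP. simpl (fact (S m)). simpl (poch (rho+1) (S m)).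
        rewrite ?plus_INR, ?mult_INR, ?S_INR.
        field; repeat split; nra.
      * rewrite !S_INR. field; repeat split; nra.
Qed.

Theorem theorem5p5 (rho : R) (n : nat) :
  0 < rho -> (1 <= n)%nat ->
  prob_no_rec_before_tau rho (0%nat, 0%nat, n)
    (INR (fact (n - 1)) / poch (rho + 1) (n - 1)).
Proof.
  intros Hr Hn. destruct n as [|m]; [lia|].
  replace (S m - 1)%nat with m by lia.
  unfold prob_no_rec_before_tau.
  assert (Hs : forall N, (m <= N)%nat ->
    sum_f_R0 (fun k => hit_norec rho k (0%nat, 0%nat, S m)) N = PP rho m).
  { assert (H0 : forall N, (N < m)%nat ->
      sum_f_R0 (fun k => hit_norec rho k (0%nat, 0%nat, S m)) N = 0).
    { induction N; intros HN; cbn [sum_f_R0]; rewrite hit_chain by exact Hr.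
      - destruct m; [lia|]. simpl. reflexivity.
      - rewrite IHN by lia. replace (Nat.eqb (S N) m) with false.
        + lra.
        + symmetry. apply Nat.eqb_neq. lia. }
    induction N; intros HN.
    - assert (m = 0%nat) by lia. subst. cbn [sum_f_R0]. rewrite hit_chain by exact Hr. reflexivity.
    - cbn [sum_f_R0]. rewrite hit_chain by exact Hr.
      destruct (Nat.eq_dec m (S N)) as [->|Hne].
      + rewrite H0 by lia. rewrite Nat.eqb_refl. lra.
      + rewrite IHN by lia. replace (Nat.eqb (S N) m) with false.
        * lra.
        * symmetry. apply Nat.eqb_neq. lia. }
  intros eps Heps. exists m. intros N HN. unfold R_dist.
  rewrite Hs by lia. unfold PP. rewrite Rminus_diag, Rabs_R0. exact Heps.
Qed.
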